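(* Let $R$ be a ring, $M$ a right $R$-module, and $I$ a two-sided ideal of $R$ with $I\subseteq \mathrm{Ann}_R(M)$ (so $M$ is naturally a right $R/I$-module via $m(r+I)=mr$). If $M$ is an $\aleph_0$-injective $R$-module, then $M$ is an $\aleph_0$-injective $R/I$-module. Conversely, if $R$ is right fully idempotent and $M$ is an $\aleph_0$-injective $R/I$-module, then $M$ is an $\aleph_0$-injective $R$-module.
   Context: Rings are associative with identity; modules are unitary right modules. A right $S$-module $M$ is $\aleph_0$-injective if for every countably generated right ideal $J$ of $S$ and every $S$-homomorphism $f:J\to M$ there is an $S$-homomorphism $\bar f:S\to M$ with $\bar f|_J=f$. A ring $R$ is right fully idempotent if every right ideal $J$ of $R$ satisfies $J^2=J$. *)

(* Defs.v *)
From HB Require Import structures.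
From mathcomp Require Import all_boot all_order all_algebra.
Set Implicit Arguments. Unset Strict Implicit. Unset Printing Implicit Defensive.
Import GRing.Theory.
Local Open Scope ring_scope.

Definition is_rmodule (R : pzRingType) (M : zmodType) (act : M -> R -> M) : Prop :=
  [/\ forall m n r, act (m + n) r = act m r + act n r,
      forall m r s, act m (r + s) = act m r + act m s,
      forall m r s, act m (r * s) = act (act m r) s
    & forall m, act m 1 = m].

Definition right_ideal (R : pzRingType) (J : R -> Prop) : Prop :=
  [/\ J 0, forall x y, J x -> J y -> J (x + y) & forall x r, J x -> J (x * r)].

Definition two_sided_ideal (R : pzRingType) (I : R -> Prop) : Prop :=
  right_ideal I /\ forall x r, I x -> I (r * x).

(* J is the right ideal generated by the countable family (a i)_{i : nat},
   i.e. J = { sum_{i<n} a_i c_i }.  (Finite or empty generating sets are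
   covered by repeating generators or taking a = 0.) *)
Definition countably_generated_right_ideal (R : pzRingType) (J : R -> Prop) : Prop :=
  exists a : nat -> R, forall x,
    J x <-> exists (n : nat) (c : nat -> R), x = \sum_(i < n) a i * c i.

(* f, restricted to J, is an R-homomorphism J -> M (values outside J are
   irrelevant). *)
Definition hom_on (R : pzRingType) (M : zmodType) (act : M -> R -> M)
  (J : R -> Prop) (f : R -> M) : Prop :=
  (forall x y, J x -> J y -> f (x + y) = f x + f y) /\
  (forall x r, J x -> f (x * r) = act (f x) r).

Definition aleph0_injective (R : pzRingType) (M : zmodType) (act : M -> R -> M) : Prop :=
  forall (J : R -> Prop) (f : R -> M),
    countably_generated_right_ideal J -> hom_on act J f ->
    exists g : R -> M, hom_on act (fun _ => True) g /\ (forall x, J x -> g x = f x).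

Definition right_fully_idempotent (R : pzRingType) : Prop :=
  forall J : R -> Prop, right_ideal J ->
    forall x, J x <-> exists (n : nat) (a b : nat -> R),
      (forall i, J (a i) /\ J (b i)) /\ x = \sum_(i < n) a i * b i.

(* Main.v *)
Require Import Defs.
From HB Require Import structures.
From mathcomp Require Import all_boot all_order all_algebra.
From Stdlib Require Import ClassicalEpsilon.
Import GRing.Theory.
Local Open Scope ring_scope.

Lemma cg_rideal (R : pzRingType) (J : R -> Prop) :
  countably_generated_right_ideal J -> right_ideal J.
Proof.
case=> a Ha; split.
- apply/Ha; exists 0%N, (fun _ => 0); by rewrite big_ord0.
- move=> x y /Ha[n [c ->]] /Ha[m [d ->]]; apply/Ha.
  exists (maxn n m), (fun i => (if (i < n)%N then c i else 0) + (if (i < m)%N then d i else 0)).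
  under [RHS]eq_bigr do rewrite mulrDr.
  rewrite big_split /=; congr (_ + _).
  + rewrite (big_ord_widen (maxn n m) (fun i => a i * c i) (leq_maxl n m)) big_mkcond.
    by apply eq_bigr => i _; case: ifP => _; rewrite ?mulr0.
  + rewrite (big_ord_widen (maxn n m) (fun i => a i * d i) (leq_maxr n m)) big_mkcond.
    by apply eq_bigr => i _; case: ifP => _; rewrite ?mulr0.
- move=> x r /Ha[n [c ->]]; apply/Ha; exists n, (fun i => c i * r).
  by rewrite mulr_suml; apply eq_bigr => i _; rewrite mulrA.
Qed.

Section Hom.
Variables (R : pzRingType) (M : zmodType) (act : M -> R -> M) (J : R -> Prop) (f : R -> M).
Hypothesis HJ : right_ideal J.
Hypothesis Hf : hom_on act J f.

Lemma hom0 : f 0 = 0.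
Proof.
case: HJ => J0 _ _; case: Hf => fadd _.
have h := fadd 0 0 J0 J0; rewrite addr0 in h.
have := congr1 (fun z => z - f 0) h; by rewrite addrK subrr.
Qed.

Lemma homN {x} : J x -> J (- x) /\ f (- x) = - f x.
Proof.
case: HJ => J0 JD JM; case: Hf => fadd _ hx.
have hn : J (- x) by rewrite -mulrN1; apply JM.
by split => //; apply/eqP; rewrite -subr_eq0 opprK addrC -fadd // subrr hom0 eqxx.
Qed.

Lemma homB {x y} : J x -> J y -> J (x - y) /\ f (x - y) = f x - f y.
Proof.
case: HJ => J0 JD JM; case: Hf => fadd _ hx hy.
have [hn fn] := homN hy.
by split; [apply JD | rewrite fadd // fn].
Qed.

Lemma homsum n (F : nat -> R) : (forall i, J (F i)) ->
  J (\sum_(i < n) F i) /\ f (\sum_(i < n) F i) = \sum_(i < n) f (F i).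
Proof.
case: HJ => J0 JD JM; case: Hf => fadd _ hF.
elim: n => [|n [IH1 IH2]]; first by rewrite !big_ord0 hom0.
rewrite !big_ord_recr /=; split; first by apply JD.
by rewrite fadd // IH2.
Qed.
End Hom.

Theorem proposition1p3 (R : pzRingType) (M : zmodType) (act : M -> R -> M)
  (Hmod : is_rmodule act) (I : R -> Prop) (HI : two_sided_ideal I)
  (Hann : forall m r, I r -> act m r = 0)
  (S : pzRingType) (pi : {rmorphism R -> S})
  (Hsurj : forall s : S, exists r : R, pi r = s)
  (Hker : forall r : R, pi r = 0 <-> I r)
  (actS : M -> S -> M) (Hcompat : forall m r, actS m (pi r) = act m r) :
  (aleph0_injective act -> aleph0_injective actS) /\
  (right_fully_idempotent R -> aleph0_injective actS -> aleph0_injective act).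
Proof.
pose lift s := proj1_sig (constructive_indefinite_description _ (Hsurj s)).
have liftK s : pi (lift s) = s by rewrite /lift; case: constructive_indefinite_description.
have rtrue : right_ideal (fun _ : R => True) by [].
split.
- move=> Hinj J f [a Ha] [fadd fmul].
  pose a' i := lift (a i).
  pose J' := fun x => exists n (c : nat -> R), x = \sum_(i < n) a' i * c i.
  have J'J x : J' x -> J (pi x).
    move=> [n [c ->]]; apply/Ha; exists n, (fun i => pi (c i)); rewrite rmorph_sum.
    by apply eq_bigr => i _; rewrite rmorphM liftK.
  have [g' [Hg' g'agree]] : exists g : R -> M, hom_on act (fun _ => True) g /\
      (forall x, J' x -> g x = f (pi x)).
    apply: Hinj; first by exists a'.
    split.
    + by move=> x y hx hy /=; rewrite rmorphD fadd //; apply J'J.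
    + by move=> x r hx /=; rewrite rmorphM fmul ?Hcompat //; apply J'J.
  case: (Hg') => g'add g'mul.
  have g'I i : I i -> g' i = 0 by move=> hi; rewrite -[i]mul1r g'mul // Hann.
  have g'eq x y : pi x = pi y -> g' x = g' y.
    move=> e; apply/eqP; rewrite -subr_eq0; apply/eqP.
    have [_ <-] := @homB _ _ _ _ _ rtrue Hg' x y Logic.I Logic.I.
    by apply g'I; apply/Hker; rewrite rmorphB e subrr.
  exists (fun s => g' (lift s)); split; first split.
  + by move=> s t _ _; rewrite -g'add //; apply g'eq; rewrite rmorphD !liftK.
  + move=> s t _; rewrite -[in RHS](liftK t) Hcompat -g'mul //.
    by apply g'eq; rewrite rmorphM !liftK.
  + move=> s /Ha [n [c hs]].
    rewrite (g'eq _ (\sum_(i < n) a' i * lift (c i))).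
    * rewrite g'agree; last by exists n, (fun i => lift (c i)).
      congr f; rewrite rmorph_sum hs; apply eq_bigr => i _; by rewrite rmorphM !liftK.
    * rewrite liftK rmorph_sum hs; apply eq_bigr => i _; by rewrite rmorphM !liftK.
- move=> Hfi Hinj J f Hcg Hf.
  have HJ := @cg_rideal R J Hcg.
  case: (HJ) => J0 JD JM; case: (Hf) => fadd fmul.
  case: Hcg => a Ha.
  have JI_f z : J z -> I z -> f z = 0.
    have HJI : right_ideal (fun x => J x /\ I x).
      case: HI => [[I0 ID IM] _]; split.
      * by split.
      * by move=> x y [? ?] [? ?]; split; [apply JD | apply ID].
      * by move=> x r [? ?]; split; [apply JM | apply IM].
    move=> hJ hI; have [n [b [c [Hbc ->]]]] := (Hfi _ HJI z).1 (conj hJ hI).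
    have hbc i : J (b i * c i) by apply JM; case: (Hbc i) => [[]].
    rewrite ((@homsum R M act J f HJ Hf n (fun i => b i * c i)) hbc).2.
    by apply big1 => i _; rewrite fmul ?Hann //; case: (Hbc i) => [[] ? ? [] ?].
  have fwd x y : J x -> J y -> pi x = pi y -> f x = f y.
    move=> hx hy e; apply/eqP; rewrite -subr_eq0; apply/eqP.
    have [hxy <-] := @homB _ _ _ _ _ HJ Hf x y hx hy.
    by apply JI_f => //; apply/Hker; rewrite rmorphB e subrr.
  pose fS s := match excluded_middle_informative (exists x, J x /\ pi x = s) with
    | left h => f (proj1_sig (constructive_indefinite_description _ h))
    | right _ => 0 end.
  have fSE s x : J x -> pi x = s -> fS s = f x.
    move=> hx hs; rewrite /fS; case: excluded_middle_informative => [h|h];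
      last by exfalso; apply h; exists x.
    case: constructive_indefinite_description => y [hy hy'] /=.
    by apply fwd => //; rewrite hy' hs.
  pose JS s := exists n (c : nat -> S), s = \sum_(i < n) pi (a i) * c i.
  have JSJ s : JS s -> exists x, J x /\ pi x = s.
    move=> [n [c ->]]; exists (\sum_(i < n) a i * lift (c i)); split.
    * by apply/Ha; exists n, (fun i => lift (c i)).
    * by rewrite rmorph_sum; apply eq_bigr => i _; rewrite rmorphM liftK.
  have [gS [[gadd gmul] gagree]] : exists g : S -> M, hom_on actS (fun _ => True) g /\
      (forall x, JS x -> g x = fS x).
    apply: Hinj; first by exists (fun i => pi (a i)).
    split.
    + move=> s t /JSJ[x [hx <-]] /JSJ[y [hy <-]].
      rewrite -rmorphD (fSE _ (x + y)) ?(fSE (pi x) x) ?(fSE (pi y) y) ?fadd //; by apply JD.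
    + move=> s t /JSJ[x [hx <-]]; rewrite -[t]liftK -rmorphM.
      rewrite (fSE _ (x * lift t)) ?(fSE (pi x) x) ?Hcompat ?fmul //; by apply JM.
  exists (fun r => gS (pi r)); split; first split.
  + by move=> x y _ _ /=; rewrite rmorphD gadd.
  + by move=> x r _ /=; rewrite rmorphM gmul // Hcompat.
  + move=> x hx /=; rewrite gagree; first exact: fSE.
    case/Ha: hx => n [c ->]; exists n, (fun i => pi (c i)).
    by rewrite rmorph_sum; apply eq_bigr => i _; rewrite rmorphM.
Qed.
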